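(* If $\pi\le\beta_1<\beta_2\le\beta_{cr}$, then $g(\beta_1,\theta)<g(\beta_2,\theta)$ for all $\theta\in(0,\pi/2]$.
   Context: $\beta_{cr}\in(\pi,2\pi)$ is the unique solution in $(\pi,2\pi)$ of $\tan\big(\frac{\beta_{cr}-\pi}{4}\big)=4\big(\Gamma(3/4)/\Gamma(1/4)\big)^2$. For $\pi\le\beta\le\beta_{cr}$, let $\psi_\beta$ be the function on $(0,\beta)$, symmetric about $\beta/2$, with $\psi_\beta(\theta)=\cos\big(\tfrac12(\beta/2-\theta)\big)$ for $\pi/2\le\theta\le\beta-\pi/2$, and which on $(0,\pi/2]$ solves $\psi''+\psi/(4\sin^2\theta)=0$ with $\psi(\pi/2)=\cos((\beta-\pi)/4)$, $\psi'(\pi/2)=\tfrac12\sin((\beta-\pi)/4)$; it is known that $\psi_\beta>0$ on $(0,\beta)$. Set $g(\beta,\theta)=\sin\theta\,\psi_\beta'(\theta)/\psi_\beta(\theta)$ for $0<\theta\le\pi/2$. *)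

(* Defs.v *)
From Stdlib Require Import Reals Lra Arith Factorial.
Open Scope R_scope.

Fixpoint poch_prod (x : R) (n : nat) : R :=
  match n with
  | O => x
  | S m => poch_prod x m * (x + INR (S m))
  end.

(* Gauss/Euler limit formula for the Gamma function (x > 0):
   Gamma x = lim_{n -> oo} n! n^x / (x (x+1) ... (x+n)). *)
Definition gamma_seq (x : R) (n : nat) : R :=
  INR (fact n) * Rpower (INR n) x / poch_prod x n.

Definition is_Gamma (x g : R) : Prop := Un_cv (gamma_seq x) g.

(* psi is (the restriction to (0, pi/2] of) psi_beta, with derivative dpsi:
   it solves psi'' + psi / (4 sin^2) = 0 on (0, pi/2], with the initial data
   at pi/2 given in the paper; also psi > 0 there (known fact). *)
Definition psi_sol (beta : R) (psi dpsi : R -> R) : Prop :=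
  (forall t, 0 < t <= PI / 2 ->
     derivable_pt_lim psi t (dpsi t) /\
     derivable_pt_lim dpsi t (- psi t / (4 * (sin t) ^ 2)) /\
     0 < psi t) /\
  psi (PI / 2) = cos ((beta - PI) / 4) /\
  dpsi (PI / 2) = / 2 * sin ((beta - PI) / 4).

Definition gfun (psi dpsi : R -> R) (t : R) : R :=
  sin t * dpsi t / psi t.

(* Main.v *)
Require Import Defs.
From Stdlib Require Import Reals Lra Ranalysis5.
Open Scope R_scope.

Lemma sin_pos_in t : 0 < t <= PI / 2 -> 0 < sin t.
Proof. intros [H1 H2]. apply sin_gt_0; [lra|]. pose proof PI_RGT_0; lra. Qed.

Lemma gder (b : R) (psi dpsi : R -> R) : psi_sol b psi dpsi ->
  forall t, 0 < t <= PI / 2 ->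
  derivable_pt_lim (gfun psi dpsi) t
    ((cos t * gfun psi dpsi t - (gfun psi dpsi t)^2 - 1/4) / sin t).
Proof.
  intros [Hs _] t Ht.
  destruct (Hs t Ht) as [Hd [Hdd Hp]].
  pose proof (sin_pos_in t Ht) as Hsn.
  assert (H := derivable_pt_lim_div (mult_fct sin dpsi) psi t _ _
     (derivable_pt_lim_mult sin dpsi t _ _ (derivable_pt_lim_sin t) Hdd) Hd
     (Rgt_not_eq _ _ Hp)).
  change (gfun psi dpsi) with (div_fct (mult_fct sin dpsi) psi).
  match goal with HH : derivable_pt_lim _ _ ?L |- derivable_pt_lim _ _ ?L' =>
    replace L' with L; [exact HH|] end.
  unfold div_fct, mult_fct, Rsqr. field. split; lra.
Qed.

Lemma gcont (b : R) (psi dpsi : R -> R) : psi_sol b psi dpsi ->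
  forall t, 0 < t <= PI / 2 -> continuity_pt (gfun psi dpsi) t.
Proof.
  intros Hs t Ht. apply derivable_continuous_pt.
  exact (exist _ _ (gder b psi dpsi Hs t Ht)).
Qed.

Lemma gend (b : R) (psi dpsi : R -> R) : psi_sol b psi dpsi ->
  PI <= b < 2 * PI -> gfun psi dpsi (PI/2) = / 2 * tan ((b - PI) / 4).
Proof.
  intros [_ [H1 H2]] Hb. unfold gfun. rewrite H1, H2, sin_PI2. unfold tan.
  assert (0 < cos ((b - PI) / 4)).
  { apply cos_gt_0; pose proof PI_RGT_0; lra. }
  field. lra.
Qed.

Theorem lemma4 (G1 G3 bcr b1 b2 : R) (psi1 dpsi1 psi2 dpsi2 : R -> R) :
  is_Gamma (1 / 4) G1 -> is_Gamma (3 / 4) G3 ->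
  PI < bcr < 2 * PI ->
  tan ((bcr - PI) / 4) = 4 * (G3 / G1) ^ 2 ->
  PI <= b1 -> b1 < b2 -> b2 <= bcr ->
  psi_sol b1 psi1 dpsi1 -> psi_sol b2 psi2 dpsi2 ->
  forall t, 0 < t <= PI / 2 -> gfun psi1 dpsi1 t < gfun psi2 dpsi2 t.
Proof.
  intros _ _ Hbcr _ Hb1 H12 Hb2 S1 S2 t Ht.
  pose proof PI_RGT_0 as HPI.
  set (g1 := gfun psi1 dpsi1) in *.
  set (g2 := gfun psi2 dpsi2) in *.
  set (d := fun c => g2 c - g1 c).
  set (h := fun c => (cos c - g1 c - g2 c) / sin c).
  assert (Hend : 0 < d (PI/2)).
  { unfold d, g1, g2. rewrite (gend b1 psi1 dpsi1 S1), (gend b2 psi2 dpsi2 S2) by lra.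
    assert (Htan : tan ((b1 - PI) / 4) < tan ((b2 - PI) / 4)).
    { apply tan_increasing; lra. }
    lra. }
  assert (Hdd : forall c, 0 < c <= PI/2 -> derivable_pt_lim d c (d c * h c)).
  { intros c Hc. pose proof (sin_pos_in c Hc).
    assert (Hm := derivable_pt_lim_minus g2 g1 c _ _ (gder b2 psi2 dpsi2 S2 c Hc)
                   (gder b1 psi1 dpsi1 S1 c Hc)).
    change d with (minus_fct g2 g1).
    match goal with HH : derivable_pt_lim _ _ ?L |- derivable_pt_lim _ _ ?L' =>
      replace L' with L; [exact HH|] end.
    unfold minus_fct, h, g1, g2. field. lra. }
  assert (Hdc : forall c, 0 < c <= PI/2 -> continuity_pt d c).
  { intros c Hc. apply derivable_continuous_pt. exact (exist _ _ (Hdd c Hc)). }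
  destruct (Rlt_le_dec (g1 t) (g2 t)) as [Hlt|Hle]; [exact Hlt|].
  exfalso.
  assert (Htlt : t < PI/2).
  { destruct (Req_dec t (PI/2)) as [E|E]; [|lra].
    subst t. unfold d in Hend. lra. }
  assert (Hs : exists s, t <= s < PI/2 /\ d s = 0).
  { destruct (Req_dec (d t) 0) as [E|E].
    - exists t. split; [lra|exact E].
    - assert (Hneg : d t < 0) by (unfold d; unfold d in E; lra).
      destruct (IVT_interv d t (PI/2)) as [z [Hz1 Hz2]]; try lra.
      + intros a Ha. apply Hdc. lra.
      + exists z. split; [|exact Hz2].
        split; [lra|]. destruct (Req_dec z (PI/2)) as [E2|E2]; [|lra].
        rewrite E2 in Hz2. lra. }
  destruct Hs as [s [Hs1 Hs2]].
  assert (Hhc : forall c, s <= c <= PI/2 -> continuity_pt h c).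
  { intros c Hc. assert (Hc' : 0 < c <= PI/2) by lra.
    pose proof (sin_pos_in c Hc').
    unfold h. apply continuity_pt_div.
    - apply continuity_pt_minus; [apply continuity_pt_minus|].
      + apply continuity_cos.
      + exact (gcont b1 psi1 dpsi1 S1 c Hc').
      + exact (gcont b2 psi2 dpsi2 S2 c Hc').
    - apply continuity_sin.
    - lra. }
  destruct (continuity_ab_maj h s (PI/2) ltac:(lra) Hhc) as [Mx [HM _]].
  set (M := h Mx).
  set (k := fun c => (d c * d c) * exp (-(2 * M * c))).
  set (k' := fun c => 2 * (d c * d c) * exp (-(2 * M * c)) * (h c - M)).
  assert (Hk : forall c, s <= c <= PI/2 -> derivable_pt_lim k c (k' c)).
  { intros c Hc. assert (Hc' : 0 < c <= PI/2) by lra.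
    assert (He : derivable_pt_lim (fun c => exp (-(2 * M * c))) c
                   (exp (-(2 * M * c)) * (-(2 * M)))).
    { apply (derivable_pt_lim_comp (fun c => -(2 * M * c)) exp c).
      - replace (-(2 * M)) with (-(2 * M * 1)) by ring.
        apply (derivable_pt_lim_opp (fun c => 2 * M * c)).
        apply (derivable_pt_lim_scal (fun c => c)).
        apply derivable_pt_lim_id.
      - apply derivable_pt_lim_exp. }
    assert (Hm := derivable_pt_lim_mult (mult_fct d d) (fun c => exp (-(2 * M * c))) c _ _
                 (derivable_pt_lim_mult d d c _ _ (Hdd c Hc') (Hdd c Hc')) He).
    change k with (mult_fct (mult_fct d d) (fun c => exp (-(2 * M * c)))).
    match goal with HH : derivable_pt_lim _ _ ?L |- derivable_pt_lim _ _ ?L' =>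
      replace L' with L; [exact HH|] end.
    unfold k', mult_fct. ring. }
  destruct (MVT_cor2 k k' s (PI/2) ltac:(lra) Hk) as [c [Hc1 Hc2]].
  assert (Hks : k s = 0) by (unfold k; rewrite Hs2; ring).
  assert (Hkp : 0 < k (PI/2)).
  { unfold k. apply Rmult_lt_0_compat; [nra|apply exp_pos]. }
  assert (Hk'c : k' c <= 0).
  { unfold k'. assert (h c <= M) by (apply HM; lra).
    pose proof (exp_pos (-(2 * M * c))).
    assert (0 <= d c * d c) by nra.
    assert (0 <= 2 * (d c * d c) * exp (-(2 * M * c))) by nra.
    nra. }
  nra.
Qed.
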